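(* For integers $n>d\ge2$, \[ \bar\delta_{n,d}\ge\frac{d^d}{(d+1)^{d+1}}\cdot\frac{(n-d)^{d+1}}{(n-d)(n-d+1)\cdots n} \] and \[ \bar\delta_{n,d}\le\frac{d^d}{(d+1)^{d+1}}\cdot\frac{\left(n-\frac{d-1}{2}\right)^{d+1}}{(n-d)(n-d+1)\cdots n}+\frac{(d+1)(n+1)}{(d-1)(n-d)^2}. \]
   Context: For integers $\lambda\ge0$, $d\ge1$, write $\lambda=\sum_{i=1}^d\binom{k_i}{i}$ uniquely with $k_d>\cdots>k_1\ge0$ and set $\lambda^{[d]}=\sum_{i=1}^d\binom{k_i}{i+1}$. For $n>d$ and $0\le\lambda\le\binom nd$ let $\delta_{n,d}(\lambda)=\lambda/\binom nd-\lambda^{[d]}/\binom n{d+1}$, and $\bar\delta_{n,d}=\max_{0\le\lambda\le\binom nd}\delta_{n,d}(\lambda)$ (denoted $\delta_{n,d}$ in the paper's section on limits). *)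

(* Defs.v *)
From mathcomp Require Import all_boot all_order all_algebra.
Set Implicit Arguments. Unset Strict Implicit. Unset Printing Implicit Defensive.
Import Order.TTheory GRing.Theory Num.Theory.

(* Cascade (Macaulay) representation, computed greedily:
   for i >= 1 and r, [kmax i r] is the largest k with 'C(k, i) <= r
   (such k satisfies k < r + i + 1 since 'C(r+i, i) > r for i >= 1). *)
Definition kmax (i r : nat) : nat :=
  \max_(k < (r + i).+1 | 'C(k, i) <= r) (k : nat).

(* [lam_upper i r] = r^[i] : with r = \sum_{j=1}^i 'C(k_j, j),
   k_i > ... > k_1 >= 0 (greedy = the unique representation),
   this is \sum_{j=1}^i 'C(k_j, j+1). *)
Fixpoint lam_upper (i r : nat) : nat :=
  match i with
  | 0 => 0
  | i'.+1 => 'C(kmax i r, i'.+2) + lam_upper i' (r - 'C(kmax i r, i))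
  end.

Fixpoint cascade (i r : nat) : seq nat :=
  match i with
  | 0 => [::]
  | i'.+1 => kmax i r :: cascade i' (r - 'C(kmax i r, i))
  end.

Local Open Scope ring_scope.

Definition delta_nd (R : realFieldType) (n d lam : nat) : R :=
  (lam%:R / ('C(n, d))%:R) - ((lam_upper d lam)%:R / ('C(n, d.+1))%:R).

(* \bar\delta_{n,d} = max over 0 <= lam <= 'C(n,d) of delta_{n,d}(lam).
   The base value 0 is harmless since delta_{n,d}(0) = 0 is in the range. *)
Definition delta_bar (R : realFieldType) (n d : nat) : R :=
  \big[Num.max/0]_(lam < ('C(n, d)).+1) delta_nd R n d lam.

(* Main.v *)
Require Import Defs.
From mathcomp Require Import all_boot all_order all_algebra.
From mathcomp Require Import zify ring lra.
Set Implicit Arguments. Unset Strict Implicit. Unset Printing Implicit Defensive.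
Import Order.TTheory GRing.Theory Num.Theory.

Lemma kmax_le i r : (0 < i)%N -> ('C(kmax i r, i) <= r)%N.
Proof.
move=> i0; rewrite /kmax.
apply: (big_ind (fun x => 'C(x, i) <= r)%N).
- by rewrite bin_small.
- by move=> x y hx hy; rewrite /maxn; case: ifP.
- by move=> k.
Qed.

Lemma kmax1 r : (r <= kmax 1 r)%N.
Proof.
rewrite /kmax.
have hr : (r < (r + 1).+1)%N by lia.
apply: (@leq_bigmax_cond _ (fun k : 'I_(r+1).+1 => 'C(k, 1) <= r)%N
  (fun k => nat_of_ord k) (Ordinal hr)).
by rewrite /= bin1.
Qed.

Lemma kmax0 i : (0 < i)%N -> (kmax i 0 < i)%N.
Proof.
move=> i0; rewrite /kmax.
apply: (big_ind (fun x => x < i)%N) => //.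
- by move=> x y hx hy; rewrite /maxn; case: ifP.
- move=> k; rewrite leqn0 => /eqP hk; rewrite ltnNge -bin_gt0 hk //.
Qed.

Lemma lam_upper0 i : lam_upper i 0 = 0%N.
Proof.
elim: i => [|i IH] //=.
rewrite bin_small; last by have := kmax0 (ltn0Sn i); lia.
by rewrite sub0n IH.
Qed.

Lemma bin_succ_gt k d : (0 < d)%N -> (d <= k.+1)%N -> ('C(k, d) < 'C(k.+1, d))%N.
Proof.
case: d => // d _ hd; rewrite binS -[X in (X < _)%N]addn0 ltn_add2l bin_gt0; lia.
Qed.

Lemma bin_mono_strict k k' d : (0 < d)%N -> (d <= k.+1)%N -> (k < k')%N -> ('C(k, d) < 'C(k', d))%N.
Proof.
move=> d0 hd hk; apply: (leq_trans (bin_succ_gt d0 hd)); exact: leq_bin2l.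
Qed.

Lemma bin_ge k d : (0 < d)%N -> (d <= k)%N -> (k - d <= 'C(k, d))%N.
Proof.
move=> d0; elim: k => [|k IH] hd; first by lia.
case: (ltnP k d) => hk.
  have -> : k.+1 = d by lia. by rewrite subnn.
have := bin_succ_gt d0 hd; have := IH hk; lia.
Qed.

Lemma kmax_bin k d : (0 < d)%N -> (d <= k)%N -> kmax d 'C(k, d) = k.
Proof.
move=> d0 hd; apply/eqP; rewrite eqn_leq; apply/andP; split.
- rewrite /kmax; apply/bigmax_leqP => i hi.
  rewrite leqNgt; apply/negP => hki.
  have := bin_mono_strict d0 (leqW hd) hki; lia.
- rewrite /kmax.
  have hr : (k < ('C(k, d) + d).+1)%N by have := bin_ge d0 hd; lia.
  exact: (@leq_bigmax_cond _ (fun k' : 'I_('C(k, d) + d).+1 => 'C(k', d) <= 'C(k, d))%N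
    (fun k' => nat_of_ord k') (Ordinal hr) (leqnn _)).
Qed.

Lemma lam_upper_bin k d : (0 < d)%N -> (d <= k)%N -> lam_upper d 'C(k, d) = 'C(k, d.+1).
Proof.
case: d => // d _ hd /=.
by rewrite kmax_bin // subnn lam_upper0 addn0.
Qed.

Lemma ffact_prod k d : 'C(k, d) * d`! = \prod_(i < d) (k - i).
Proof.
elim: d => [|d IH]; first by rewrite bin0 big_ord0.
rewrite big_ord_recr /= -IH factS mulnCA mulnA mul_bin_left; lia.
Qed.

Lemma P_nat n d : d < n -> \prod_(n - d <= i < n.+1) i = (n - d) * ('C(n, d) * d`!).
Proof.
elim: d => [|d IH] hd.
  rewrite subn0 bin0 fact0 muln1 big_ltn // big_geq //; lia.
rewrite big_ltn; last by lia.
have -> : (n - d.+1).+1 = n - d by lia.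
rewrite IH; last by lia.
rewrite factS; congr (_ * _).
by rewrite mulnA mulnA [_ * d.+1]mulnC mul_bin_left.
Qed.

Lemma inj_bin k j Y : k <= Y -> 'C(k, j) * (Y - k) <= 'C(Y, j.+1).
Proof.
elim: Y => [|Y IH] hk.
  by rewrite sub0n muln0.
case: (ltnP Y k) => hY.
  have -> : Y.+1 = k by lia. by rewrite subnn muln0.
rewrite binS subSn // mulnS addnC leq_add //; first exact: IH.
exact: leq_bin2l.
Qed.

Lemma N3 n d j k X : 0 < X -> (j.+1 * (n - d) <= X * d.+1) ->
  'C(k, j) * (j.+1 * (n - d) - d.+1 * (k - j)) <= 'C(j + X, j) * (n - d).
Proof.
move=> X0 ha.
set a := j.+1 * (n - d).
case: (ltnP k j) => hkj.
  by rewrite bin_small.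
case: (leqP a (d.+1 * (k - j))) => hau.
  have e0 : a - d.+1 * (k - j) = 0 by lia.
  by rewrite e0 muln0.
have hu : k - j < X.
  have : d.+1 * (k - j) < X * d.+1 by lia.
  rewrite mulnC ltn_pmul2r //.
have hin' : 'C(k, j) * (j + X - k) <= 'C(j + X, j.+1) by apply: inj_bin; lia.
have hm := mul_bin_left (j + X) j.
have e1 : j + X - j = X by lia.
rewrite e1 in hm.
rewrite -(leq_pmul2r X0).
have s1 : (a - d.+1 * (k - j)) * X <= a * (j + X - k).
  have : a * (k - j) <= X * d.+1 * (k - j) by rewrite leq_mul2r ha orbT.
  nia.
apply: (leq_trans (_ : _ <= 'C(k, j) * (a * (j + X - k)))).
  by rewrite -mulnA leq_mul2l s1 orbT.
apply: (leq_trans (_ : _ <= a * 'C(j + X, j.+1))).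
  by rewrite mulnCA leq_mul2l hin' orbT.
rewrite /a mulnAC hm; nia.
Qed.

Definition Xc (n d j : nat) : nat := (j.+1 * (n - d) + d) %/ d.+1.

Lemma Xc_ge n d j : (j.+1 * (n - d) <= Xc n d j * d.+1)%N.
Proof.
rewrite /Xc; have := divn_eq (j.+1 * (n - d) + d) d.+1.
have := ltn_pmod (j.+1 * (n - d) + d) (ltn0Sn d); lia.
Qed.

Lemma Xc_mono n d j : (Xc n d j <= Xc n d j.+1)%N.
Proof. rewrite /Xc; apply: leq_div2r; nia. Qed.

Lemma Xc_top n d : (0 < d)%N -> (d < n)%N -> (Xc n d d.-1 <= n - d)%N.
Proof.
move=> d0 hn; rewrite /Xc -ltnS ltn_divLR //.
have -> : d.-1.+1 = d by lia.
nia.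
Qed.

Lemma R1 n d j : ('C(j + Xc n d j, j) * n.+1 <= 'C(j.+1 + Xc n d j.+1, j.+1) * d.+1)%N.
Proof.
set X := Xc n d j.
have h1 := Xc_ge n d j.
have h2 : ('C(j.+1 + X, j.+1) <= 'C(j.+1 + Xc n d j.+1, j.+1))%N.
  apply: leq_bin2l; have := Xc_mono n d j; lia.
have h3 := mul_bin_diag (j.+1 + X) j.
have e : (j.+1 + X).-1 = j + X by lia.
rewrite e in h3.
rewrite -(leq_pmul2l (ltn0Sn j)).
apply: (@leq_trans ((j.+1 + X) * 'C(j + X, j) * d.+1)).
  have : (j.+1 * n.+1 <= (j.+1 + X) * d.+1)%N by nia.
  move=> h; rewrite mulnCA mulnAC [_ * 'C(j + X, j)]mulnC leq_mul2l h orbT //.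
rewrite h3 -mulnA leq_mul2l; apply/orP; right.
by rewrite leq_mul2r h2 orbT.
Qed.

Lemma R2 n d : (0 < d)%N -> (d < n)%N ->
  ('C(d.-1 + Xc n d d.-1, d.-1) * n <= d * 'C(n, d))%N.
Proof.
move=> d0 hn.
have h := mul_bin_diag n d.-1.
have e : d.-1.+1 = d by lia.
rewrite e in h.
rewrite -h mulnC leq_mul2l; apply/orP; right.
apply: leq_bin2l; have := Xc_top d0 hn; lia.
Qed.

Lemma Xc_gt0 n d j : (d < n)%N -> (0 < Xc n d j)%N.
Proof.
move=> hn; rewrite /Xc divn_gt0 //; nia.
Qed.


Local Open Scope ring_scope.

Lemma decomp (R : realFieldType) (d : nat) (g : R) (H : nat -> R) :
  (forall j k, (0 < j)%N -> (j <= d)%N -> ('C(k, j))%:R - g * ('C(k, j.+1))%:R <= H j) ->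
  forall i r, (i <= d)%N -> (i = 0%N -> r = 0%N) ->
  r%:R - g * (lam_upper i r)%:R <= \sum_(j < i) H j.+1.
Proof.
move=> hH; elim => [|i IH] r hi hr.
  by rewrite hr //= big_ord0 mulr0 subr0.
rewrite big_ord_recr /=.
set k := kmax i.+1 r.
have hk : ('C(k, i.+1) <= r)%N by exact: kmax_le.
have hr' : i = 0%N -> (r - 'C(k, i.+1))%N = 0%N.
  move=> i0; rewrite /k i0 bin1; have := kmax1 r; lia.
have := IH (r - 'C(k, i.+1))%N (ltnW hi) hr'.
have := hH i.+1 k (ltn0Sn i) hi.
move=> h1 h2.
have er : (r%:R : R) = (r - 'C(k, i.+1))%N%:R + ('C(k, i.+1))%:R by rewrite -natrD subnK.
rewrite /= natrD mulrDr.
lra.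
Qed.

Lemma U3 (R : realFieldType) n d j k : (d < n)%N ->
  ('C(k, j))%:R - ((d.+1)%:R / ((n - d)%N)%:R) * ('C(k, j.+1))%:R
    <= ('C(j + Xc n d j, j))%:R / (j.+1)%:R :> R.
Proof.
move=> hn.
set X := Xc n d j.
set a := (j.+1 * (n - d))%N.
have nd0 : (0 : R) < ((n - d)%N)%:R by rewrite ltr0n; lia.
have j0 : (0 : R) < (j.+1)%:R by rewrite ltr0n.
have hN3 := N3 k (Xc_gt0 j hn) (Xc_ge n d j).
have e1 : ((j.+1)%:R * ((n - d)%N)%:R) *
   (('C(k, j))%:R - ((d.+1)%:R / ((n - d)%N)%:R) * ('C(k, j.+1))%:R)
   = (a * 'C(k, j))%N%:R - (d.+1 * (k - j) * 'C(k, j))%N%:R :> R.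
  rewrite -mulnA -mul_bin_left /a !natrM; field; lra.
rewrite ler_pdivlMr //.
rewrite -(ler_pM2r nd0).
apply: (le_trans (_ : _ <= (('C(j + X, j) * (n - d))%N)%:R)); last first.
  by rewrite natrM.
set hh := (_ - _ * _).
have -> : hh * (j.+1)%:R * ((n - d)%N)%:R = ((j.+1)%:R * ((n - d)%N)%:R) * hh by ring.
rewrite e1.
case: (leqP (d.+1 * (k - j)) a) => h.
  rewrite -natrB; last by rewrite leq_mul2r h orbT.
  rewrite ler_nat; apply: leq_trans hN3; rewrite mulnC mulnBr; nia.
apply: (le_trans (_ : _ <= 0)); last by rewrite ler0n.
rewrite subr_le0 ler_nat leq_mul2r; rewrite ltnW ?orbT //.
Qed.

Lemma sum_lin (R : realFieldType) (k : R) d :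
  \sum_(i < d) (k - (i%:R : R)) = d%:R * k - d%:R * (d%:R - 1) / 2.
Proof.
elim: d => [|d IH]; first by rewrite big_ord0 mul0r mul0r mul0r subr0.
rewrite big_ord_recr /= IH -natr1; by field.
Qed.

Lemma amgm_ff (R : realFieldType) (k d : nat) : (0 < d)%N -> (d <= k)%N ->
  \prod_(i < d) (k%:R - (i%:R : R)) <= (k%:R - (d%:R - 1) / 2) ^+ d.
Proof.
move=> d0 hk.
have h := @leif_AGM R _ predT (fun i : 'I_d => k%:R - (i : nat)%:R).
rewrite card_ord in h.
have hp : {in predT, forall i : 'I_d, 0 <= k%:R - (i : nat)%:R :> R}.
  move=> i _; rewrite subr_ge0 ler_nat; have := ltn_ord i; lia.
have := (h hp).1.
rewrite (eq_bigl (fun _ => true)) // [X in _ <= (X / _) ^+ _ -> _](eq_bigl (fun _ => true)) //.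
rewrite sum_lin.
have -> : (d%:R * k%:R - d%:R * (d%:R - 1) / 2) / d%:R = k%:R - (d%:R - 1) / 2 :> R.
  field; rewrite pnatr_eq0; lia.
by [].
Qed.

Lemma amgm_wt (R : realFieldType) (y z : R) (d : nat) : (0 < d)%N -> 0 <= y -> 0 <= z ->
  y ^+ d * z <= (d%:R ^+ d / (d%:R + 1) ^+ d.+1) * (y + z) ^+ d.+1.
Proof.
move=> d0 y0 z0.
set E := fun i : 'I_d.+1 => if (i < d)%N then y / d%:R else z.
have h := @leif_AGM R _ predT E.
rewrite card_ord in h.
have dR : (0 : R) < d%:R by rewrite ltr0n.
have hp : {in predT, forall i : 'I_d.+1, 0 <= E i}.
  move=> i _; rewrite /E; case: ifP => // _; exact: divr_ge0.
have := (h hp).1.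
rewrite (eq_bigl (fun _ => true)) // [X in _ <= (X / _) ^+ _ -> _](eq_bigl (fun _ => true)) //.
have -> : \prod_(i < d.+1) E i = (y / d%:R) ^+ d * z.
  rewrite big_ord_recr /= /E ltnn.
  congr (_ * _); rewrite (eq_bigr (fun _ => y / d%:R)) ?prodr_const ?card_ord //.
  by move=> i _ /=; rewrite ltn_ord.
have -> : \sum_(i < d.+1) E i = y + z.
  rewrite big_ord_recr /= /E ltnn.
  rewrite (eq_bigr (fun _ => y / d%:R)) ?sumr_const ?card_ord.
    rewrite -mulr_natr; congr (_ + _); field; lra.
  by move=> i _ /=; rewrite ltn_ord.
move=> H.
have e : y ^+ d * z = d%:R ^+ d * ((y / d%:R) ^+ d * z).
  rewrite exprMn exprVn [y ^+ d / _]mulrC !mulrA mulfV ?mul1r //.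
  rewrite expf_neq0 //; lra.
rewrite e.
have e2 : (d%:R ^+ d / (d%:R + 1) ^+ d.+1) * (y + z) ^+ d.+1
   = d%:R ^+ d * ((y + z) / (d.+1)%:R) ^+ d.+1.
  rewrite exprMn exprVn -natr1; ring.
rewrite e2 ler_pM2l //; exact: exprn_gt0.
Qed.

Definition Dj (R : realFieldType) n d j : R := ('C(j + Xc n d j, j))%:R / (j.+1)%:R.

Lemma Dj_ge0 (R : realFieldType) n d j : 0 <= Dj R n d j.
Proof. by rewrite /Dj divr_ge0 ?ler0n. Qed.

Lemma ratio (R : realFieldType) n d j :
  Dj R n d j <= Dj R n d j.+1 * ((j.+2)%:R * (d.+1)%:R / ((j.+1)%:R * (n.+1)%:R)).
Proof.
rewrite /Dj.
have := R1 n d j; rewrite -(ler_nat R) !natrM => h.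
have j1 : (0 : R) < (j.+1)%:R by rewrite ltr0n.
have j2 : (0 : R) < (j.+2)%:R by rewrite ltr0n.
have n1 : (0 : R) < (n.+1)%:R by rewrite ltr0n.
set a := ('C(j + Xc n d j, j))%:R : R in h *.
set b := ('C(j.+1 + Xc n d j.+1, j.+1))%:R : R in h *.
have -> : b / j.+2%:R * (j.+2%:R * d.+1%:R / (j.+1%:R * n.+1%:R))
   = (b * d.+1%:R) / (n.+1)%:R / (j.+1)%:R.
  field; repeat split; lra.
rewrite ler_pM2r; last by rewrite invr_gt0.
by rewrite ler_pdivlMr.
Qed.

Lemma chain (R : realFieldType) n d m : (m < d)%N ->
  Dj R n d (d.-1 - m)%N <= Dj R n d d.-1 * (d%:R / (d - m)%N%:R) * ((d.+1)%:R / (n.+1)%:R) ^+ m.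
Proof.
elim: m => [|m IH] hm.
  rewrite !subn0 expr0 mulr1 divff ?mulr1 //; rewrite pnatr_eq0; lia.
set j := (d.-1 - m.+1)%N.
have ej : j.+1 = (d.-1 - m)%N by rewrite /j; lia.
apply: (le_trans (ratio R n d j)).
have IH' := IH (ltnW hm).
rewrite -ej in IH'.
have hpos : 0 <= (j.+2)%:R * (d.+1)%:R / ((j.+1)%:R * (n.+1)%:R) :> R.
  by rewrite divr_ge0 // mulr_ge0.
apply: (le_trans (ler_wpM2r hpos IH')).
have e1 : j.+2 = (d - m)%N by rewrite /j; lia.
have e2 : j.+1 = (d - m.+1)%N by rewrite /j; lia.
rewrite e1 e2 exprS.
have h1 : (0 : R) < (d - m)%N%:R by rewrite ltr0n; lia.
have h2 : (0 : R) < (d - m.+1)%N%:R by rewrite ltr0n; lia.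
have h3 : (0 : R) < (n.+1)%:R by rewrite ltr0n.
rewrite le_eqVlt; apply/orP; left; apply/eqP.
field; repeat split; lra.
Qed.

Lemma geo (R : realFieldType) (rho : R) N : 0 <= rho -> rho < 1 ->
  \sum_(m < N) (m.+1)%:R * rho ^+ m <= 1 / (1 - rho) ^+ 2.
Proof.
move=> r0 r1.
have key : (1 - rho) ^+ 2 * \sum_(m < N) (m.+1)%:R * rho ^+ m
   = 1 - (N.+1)%:R * rho ^+ N + N%:R * rho ^+ N.+1.
  elim: N => [|N IH]; first by rewrite big_ord0 mulr0 expr0 mul1r mul0r; lra.
  rewrite big_ord_recr /= mulrDr IH !exprS -!natr1; ring.
have p : 0 < (1 - rho) ^+ 2 by apply: exprn_gt0; lra.
rewrite ler_pdivlMr // mulrC key.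
have : 0 <= rho ^+ N * ((N.+1)%:R - N%:R * rho).
  apply: mulr_ge0; first exact: exprn_ge0.
  rewrite -natr1; have : N%:R * rho <= N%:R :> R.
    by rewrite ler_piMr ?ler0n // ltW.
  lra.
rewrite exprS; nra.
Qed.

Lemma U4 (R : realFieldType) n d : (2 <= d)%N -> (d < n)%N ->
  \sum_(j < d.-1) Dj R n d j.+1
    <= ('C(n, d))%:R * (((d%:R + 1) * (n%:R + 1)) / ((d%:R - 1) * ((n - d)%N)%:R ^+ 2)).
Proof.
move=> d2 hn.
set rho : R := (d.+1)%:R / (n.+1)%:R.
have n1 : (0 : R) < (n.+1)%:R by rewrite ltr0n.
have rho0 : 0 <= rho by rewrite divr_ge0.
have rho1 : rho < 1 by rewrite ltr_pdivrMr // mul1r ltr_nat.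
have e : \sum_(j < d.-1) Dj R n d j.+1 = \sum_(m < d.-1) Dj R n d (d.-1 - m)%N.
  rewrite (reindex_inj rev_ord_inj) /=; apply: eq_bigr => i _.
  congr (Dj R n d _); have := ltn_ord i; lia.
rewrite e.
apply: (le_trans (_ : _ <= \sum_(m < d.-1) Dj R n d d.-1 * ((m.+1)%:R * rho ^+ m))).
  apply: ler_sum => i _.
  have hi := ltn_ord i.
  have hid : (i < d)%N by lia.
  apply: (le_trans (@chain R n d i hid)).
  rewrite -mulrA ler_wpM2l ?Dj_ge0 // ler_wpM2r ?exprn_ge0 //.
  have h1 : (0 : R) < (d - i)%N%:R by rewrite ltr0n; lia.
  rewrite ler_pdivrMr // -natrM ler_nat; nia.
rewrite -mulr_sumr.
have hg := @geo R rho (d.-1) rho0 rho1.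
apply: (le_trans (ler_wpM2l (Dj_ge0 R n d d.-1) hg)).
have hD : Dj R n d d.-1 <= ('C(n, d))%:R / n%:R.
  rewrite /Dj.
  have e1 : d.-1.+1 = d by lia.
  rewrite e1.
  have d0' : (0 < d)%N by lia.
  have := @R2 n d d0' hn.
  rewrite -(ler_nat R) !natrM => h.
  have d0 : (0 : R) < d%:R by rewrite ltr0n; lia.
  have n0 : (0 : R) < n%:R by rewrite ltr0n; lia.
  rewrite ler_pdivrMr // mulrAC ler_pdivlMr //; lra.
have hnd : (0 : R) < ((n - d)%N)%:R by rewrite ltr0n; lia.
have e2 : 1 / (1 - rho) ^+ 2 = ((n.+1)%:R / ((n - d)%N)%:R) ^+ 2.
  rewrite /rho natrB; last by lia.
  have : (d%:R : R) < n%:R by rewrite ltr_nat.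
  move=> hdn; rewrite -!natr1; field.
  apply/andP; split; apply/negP => /eqP; lra.
rewrite e2.
have hD' : 0 <= ((n.+1)%:R / ((n - d)%N)%:R) ^+ 2 :> R by apply: exprn_ge0; apply: divr_ge0.
apply: (le_trans (ler_wpM2r hD' hD)).
have n0 : (0 : R) < n%:R by rewrite ltr0n; lia.
have dm1 : (0 : R) < d%:R - 1 by rewrite -(ltr_nat R) in d2; lra.
have hnd' : ((n - d)%N)%:R = n%:R - d%:R :> R by rewrite natrB //; lia.
rewrite -subr_ge0.
have -> : 'C(n, d)%:R * ((d%:R + 1) * (n%:R + 1) / ((d%:R - 1) * ((n - d)%N)%:R ^+ 2))
  - 'C(n, d)%:R / n%:R * ((n.+1)%:R / ((n - d)%N)%:R) ^+ 2
  = 'C(n, d)%:R * (n%:R + 1) * (2 * n%:R - d%:R + 1) / (n%:R * (d%:R - 1) * ((n - d)%N)%:R ^+ 2) :> R.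
  rewrite hnd' -natr1; field.
  rewrite hnd' in hnd.
  repeat (apply/andP; split); apply/negP => /eqP; nra.
apply: divr_ge0.
  apply: mulr_ge0; [apply: mulr_ge0 => //; lra|].
  have : (d%:R : R) < n%:R by rewrite ltr_nat.
  lra.
apply: mulr_ge0; [apply: mulr_ge0; lra|apply: exprn_ge0; lra].
Qed.

Lemma hid (R : realFieldType) n d k : (d < n)%N ->
  ((n - d)%N)%:R * (('C(k, d))%:R - ((d.+1)%:R / ((n - d)%N)%:R) * ('C(k, d.+1))%:R)
  = ('C(k, d))%:R * (((n - d)%N)%:R - ((k - d)%N)%:R) :> R.
Proof.
move=> hn.
have nd0 : ((n - d)%N)%:R != 0 :> R by rewrite pnatr_eq0; lia.
have := mul_bin_left k d; move/(congr1 (fun x => x%:R : R)); rewrite !natrM => e.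
have -> : ((n - d)%N)%:R * (('C(k, d))%:R - ((d.+1)%:R / ((n - d)%N)%:R) * ('C(k, d.+1))%:R)
  = ((n - d)%N)%:R * ('C(k, d))%:R - (d.+1)%:R * ('C(k, d.+1))%:R :> R by field.
rewrite e; ring.
Qed.

Lemma prod_realB (R : realFieldType) k d : (d <= k)%N ->
  (('C(k, d) * d`!)%N)%:R = \prod_(i < d) (k%:R - (i%:R : R)).
Proof.
move=> hk; rewrite ffact_prod natr_prod; apply: eq_bigr => i _.
rewrite natrB //; have := ltn_ord i; lia.
Qed.

Lemma U2 (R : realFieldType) n d k : (0 < d)%N -> (d < n)%N ->
  ('C(k, d))%:R - ((d.+1)%:R / ((n - d)%N)%:R) * ('C(k, d.+1))%:R
   <= ((d%:R ^+ d) / ((d%:R + 1) ^+ d.+1)) * (n%:R - (d%:R - 1) / 2) ^+ d.+1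
       / (((n - d)%N)%:R * (d`!)%:R) :> R.
Proof.
move=> d0 hn.
have nd0 : (0 : R) < ((n - d)%N)%:R by rewrite ltr0n; lia.
have f0 : (0 : R) < (d`!)%:R by rewrite ltr0n fact_gt0.
have dR : (d%:R : R) < n%:R by rewrite ltr_nat.
have d0R : (0 : R) <= d%:R by rewrite ler0n.
have N0 : (0 : R) <= n%:R - (d%:R - 1) / 2 by lra.
have c0 : (0 : R) <= (d%:R ^+ d) / ((d%:R + 1) ^+ d.+1).
  by apply: divr_ge0; apply: exprn_ge0; lra.
have rhs0 : 0 <= ((d%:R ^+ d) / ((d%:R + 1) ^+ d.+1)) * (n%:R - (d%:R - 1) / 2) ^+ d.+1 :> R.
  by apply: mulr_ge0 => //; apply: exprn_ge0.
rewrite ler_pdivlMr; last by apply: mulr_gt0.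
have e := hid R k hn.
set h := (_ - _ * _) in e *.
have -> : h * (((n - d)%N)%:R * (d`!)%:R) = (((n - d)%N)%:R * h) * (d`!)%:R by ring.
rewrite e.
case: (ltnP k d) => hkd.
  by rewrite bin_small // mul0r mul0r.
case: (leqP k n) => hkn; last first.
  apply: (le_trans _ rhs0).
  rewrite -mulrA; apply: mulr_ge0_le0; first by rewrite ler0n.
  apply: mulr_le0_ge0; last by rewrite ler0n.
  rewrite subr_le0 ler_nat; lia.
have e2 : ((n - d)%N)%:R - ((k - d)%N)%:R = n%:R - k%:R :> R.
  rewrite !natrB //; [ring | lia].
rewrite e2 mulrAC -natrM prod_realB //.
apply: (le_trans (_ : _ <= (k%:R - (d%:R - 1) / 2) ^+ d * (n%:R - k%:R))).
  apply: ler_wpM2r; first by rewrite subr_ge0 ler_nat.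
  exact: amgm_ff.
have hk : (d%:R : R) <= k%:R by rewrite ler_nat.
have := @amgm_wt R (k%:R - (d%:R - 1) / 2) (n%:R - k%:R) d d0 _ _.
have -> : k%:R - (d%:R - 1) / 2 + (n%:R - k%:R) = n%:R - (d%:R - 1) / 2 :> R by ring.
apply; [lra | rewrite subr_ge0 ler_nat //].
Qed.

Lemma Lkey (R : realFieldType) n d j : (0 < d)%N -> (d < n)%N ->
  j = ((d * (n - d)) %/ d.+1)%N ->
  ((d%:R ^+ d) / ((d%:R + 1) ^+ d.+1)) * (((n - d)%N)%:R ^+ d.+1)
   <= \prod_(i < d) ((d + j)%N%:R - (i%:R : R)) * (n%:R - (d + j)%N%:R).
Proof.
move=> d0 hn hjd.
set m := (n - d)%N.
have hj1 : (d * m < j.+1 * d.+1)%N.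
  rewrite hjd; have := divn_eq (d * m) d.+1; have := ltn_pmod (d * m) (ltn0Sn d); nia.
have hj2 : (j * d.+1 <= d * m)%N by rewrite hjd leq_divM.
have dR : (0 : R) < d%:R by rewrite ltr0n.
set x : R := d%:R * m%:R / (d.+1)%:R.
have hx1 : x <= (j.+1)%:R.
  rewrite /x ler_pdivrMr ?ltr0n // -!natrM ler_nat; lia.
have hx2 : (j%:R : R) <= x.
  rewrite /x ler_pdivlMr ?ltr0n // -!natrM ler_nat; lia.
have x0 : 0 <= x by rewrite /x divr_ge0 // mulr_ge0 ?ler0n.
have em : n%:R - (d + j)%N%:R = m%:R - j%:R :> R.
  rewrite /m natrB; last by lia. rewrite natrD; ring.
rewrite em.
have emx : (m%:R : R) - x = m%:R / (d.+1)%:R.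
  rewrite /x -natr1; field; apply/negP => /eqP; lra.
have hmx : 0 <= (m%:R : R) - x by rewrite emx divr_ge0.
have key : ((d%:R ^+ d) / ((d%:R + 1) ^+ d.+1)) * (m%:R ^+ d.+1) = x ^+ d * (m%:R - x) :> R.
  rewrite emx /x -natr1 !exprMn !exprVn !exprS.
  have h1 : (d%:R + 1 : R) != 0 by apply/negP => /eqP; lra.
  have h2 : (d%:R + 1 : R) ^+ d != 0 by rewrite expf_neq0.
  field; by rewrite h1 h2.
rewrite key.
apply: (le_trans (_ : _ <= (j.+1)%:R ^+ d * (m%:R - j%:R))).
  apply: (le_trans (ler_wpM2l (exprn_ge0 _ x0) (_ : m%:R - x <= m%:R - j%:R))); last first.
    apply: ler_wpM2r; first lra.
    apply: lerXn2r => //; rewrite nnegrE //; exact: ler0n.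
  lra.
apply: ler_wpM2r; first lra.
have -> : (j.+1)%:R ^+ d = \prod_(i < d) ((j.+1)%:R : R).
  by rewrite prodr_const card_ord.
apply: ler_prod => i _.
have hi := ltn_ord i.
apply/andP; split; first by rewrite ler0n.
rewrite -natrB; last by lia.
rewrite ler_nat; lia.
Qed.


Unset Implicit Arguments.

Theorem lemma6p2 (R : realFieldType) (n d : nat) :
  (2 <= d)%N -> (d < n)%N ->
  let c : R := (d%:R ^+ d) / ((d%:R + 1) ^+ d.+1) in
  let P : R := \prod_((n - d)%N <= i < n.+1) (i%:R : R) in
  c * (((n - d)%N)%:R ^+ d.+1 / P) <= delta_bar R n d /\
  delta_bar R n d <=
    c * ((n%:R - (d%:R - 1) / 2) ^+ d.+1 / P)
    + ((d%:R + 1) * (n%:R + 1)) / ((d%:R - 1) * ((n - d)%N)%:R ^+ 2).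
Proof.
move=> d2 hn c P.
have d0 : (0 < d)%N by lia.
set A : R := ('C(n, d))%:R.
have A0 : 0 < A by rewrite ltr0n bin_gt0 ltnW.
have nd0 : (0 : R) < ((n - d)%N)%:R by rewrite ltr0n; lia.
have f0 : (0 : R) < (d`!)%:R by rewrite ltr0n fact_gt0.
have eP : P = ((n - d)%N)%:R * (A * (d`!)%:R).
  by rewrite /P -natr_prod P_nat // !natrM.
have P0 : 0 < P by rewrite eP; apply: mulr_gt0 => //; apply: mulr_gt0.
have eB : ('C(n, d.+1))%:R = A * ((n - d)%N)%:R / (d.+1)%:R :> R.
  have := mul_bin_left n d; move/(congr1 (fun x => x%:R : R)); rewrite !natrM => e.
  have d1 : (d.+1)%:R != 0 :> R by rewrite pnatr_eq0.
  have -> : ('C(n, d.+1))%:R = ((d.+1)%:R * ('C(n, d.+1))%:R) / (d.+1)%:R :> R.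
    by rewrite [(d.+1)%:R * _]mulrC mulfK.
  rewrite e /A; field; by rewrite addrC natr1 pnatr_eq0.
set g : R := (d.+1)%:R / ((n - d)%N)%:R.
have edelta : forall lam, delta_nd R n d lam = (lam%:R - g * (lam_upper d lam)%:R) / A.
  move=> lam; rewrite /delta_nd eB /g; field.
  have d1 : (0 : R) < 1 + d%:R by rewrite addrC natr1 ltr0n.
  apply/and3P; split; [by rewrite pnatr_eq0 -lt0n bin_gt0 ltnW| |]; apply/negP => /eqP; lra.
have c0 : 0 <= c by apply: divr_ge0; apply: exprn_ge0; rewrite ?addr_ge0 ?ler0n.
split.
- set j := ((d * (n - d)) %/ d.+1)%N.
  set k := (d + j)%N.
  have hj : (j <= n - d)%N.
    have := leq_divM (d * (n - d)) d.+1; rewrite -/j; nia.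
  have hk : (k <= n)%N by rewrite /k; lia.
  have hkd : (d <= k)%N by rewrite /k; lia.
  have hl : ('C(k, d) < ('C(n, d)).+1)%N by rewrite ltnS leq_bin2l.
  apply: le_trans (le_bigmax 0 (fun lam : 'I_('C(n, d)).+1 => delta_nd R n d lam) (Ordinal hl)).
  rewrite /= edelta lam_upper_bin //.
  have e := hid R k hn; rewrite -/g in e.
  have ek : ((n - d)%N)%:R - ((k - d)%N)%:R = n%:R - k%:R :> R.
    rewrite !natrB //; [ring | lia].
  rewrite ek in e.
  have -> : (('C(k, d))%:R - g * ('C(k, d.+1))%:R) / A
      = (('C(k, d) * d`!)%N)%:R * (n%:R - k%:R) / P.
    have nd1 : ((n - d)%N)%:R != 0 :> R by apply/negP => /eqP; lra.
    have eh : ('C(k, d))%:R - g * ('C(k, d.+1))%:R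
       = ('C(k, d))%:R * (n%:R - k%:R) / ((n - d)%N)%:R :> R.
      apply: (mulfI nd1); rewrite e; field; exact: nd1.
    rewrite eh eP natrM; field.
    apply/and3P; split; apply/negP => /eqP; lra.
  rewrite mulrA ler_pM2r ?invr_gt0 // prod_realB //.
  exact: Lkey.
set N : R := n%:R - (d%:R - 1) / 2.
have dR : (d%:R : R) < n%:R by rewrite ltr_nat.
have d1R : (1 : R) < d%:R by rewrite (ltr_nat R 1 d).
have N0 : 0 <= N by rewrite /N; lra.
set hi2 : R := ((d%:R + 1) * (n%:R + 1)) / ((d%:R - 1) * ((n - d)%N)%:R ^+ 2).
have hi20 : 0 <= hi2.
  rewrite /hi2; apply: divr_ge0; first by apply: mulr_ge0; lra.
  apply: mulr_ge0; [lra | apply: exprn_ge0; lra].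
rewrite /delta_bar; apply: bigmax_le.
  apply: addr_ge0 => //; apply: mulr_ge0 => //; apply: divr_ge0; [exact: exprn_ge0 | lra].
move=> lam _; rewrite edelta.
set Hd : R := c * N ^+ d.+1 / (((n - d)%N)%:R * (d`!)%:R).
set H := fun j : nat => if (j == d)%N then Hd else Dj R n d j.
have hH : forall j k, (0 < j)%N -> (j <= d)%N ->
    ('C(k, j))%:R - g * ('C(k, j.+1))%:R <= H j.
  move=> j k j0 jd; rewrite /H; case: eqP => [->|_].
    exact: U2.
  exact: U3.
have hr : d = 0%N -> (lam : nat) = 0%N by move=> h0; exfalso; lia.
have hdec := @decomp R d g H hH d (lam : nat) (leqnn d) hr.
have ed : d = d.-1.+1 by lia.
have gen : forall M, \sum_(j < M.+1) H j.+1 = \sum_(j < M) H j.+1 + H M.+1.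
  by move=> M; rewrite big_ord_recr.
have es : \sum_(j < d) H j.+1 = \sum_(j < d.-1) Dj R n d j.+1 + Hd.
  have := gen d.-1; rewrite -ed => ->.
  rewrite /H eqxx; congr (_ + _); apply: eq_bigr => i _.
  have := ltn_ord i; case: eqP => // h; lia.
rewrite es in hdec.
have hU4 := U4 R d2 hn.
rewrite -/A -/hi2 in hU4.
rewrite ler_pdivrMr //.
apply: (le_trans hdec).
have -> : (c * (N ^+ d.+1 / P) + hi2) * A = Hd + A * hi2.
  rewrite /Hd eP; field.
  apply/and3P; split; apply/negP => /eqP; lra.
lra.
Qed.
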